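(* Let $A\in\mathbb{R}^{m\times n}$ be semi-monotone (i.e. $A^{\dagger}\geq 0$). Let $A=B-C$ be a proper weak regular splitting and $A=U-V$ a proper regular splitting of $A$. If $A\geq 0$ and $B^{\dagger}\geq U^{\dagger}$, then $$\rho(B^{\dagger}C)\leq \rho(U^{\dagger}V)<1.$$
   Context: All matrices are real. $X^{\dagger}$ denotes the Moore–Penrose inverse of $X$, and $\rho(\cdot)$ the spectral radius. For a matrix $X$, $X\geq 0$ means that all entries of $X$ are nonnegative and at least one entry is positive; $X\geq Y$ means $X-Y\geq 0$. $R(X)$ and $N(X)$ denote range and null space. A splitting $A=U-V$ is proper if $R(U)=R(A)$ and $N(U)=N(A)$. It is a proper regular splitting if it is proper, $U^{\dagger}\geq 0$ and $V\geq 0$; it is a proper weak regular splitting if it is proper, $U^{\dagger}\geq 0$ and $U^{\dagger}V\geq 0$. *)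

(* Defs.v *)
From HB Require Import structures.
From mathcomp Require Import all_boot all_order all_algebra.
From mathcomp Require Import complex.
From Stdlib Require Import ClassicalEpsilon.
Set Implicit Arguments. Unset Strict Implicit. Unset Printing Implicit Defensive.
Import Order.TTheory GRing.Theory Num.Theory.
Local Open Scope ring_scope.

Section Defs.
Variable R : rcfType.

Definition is_mpinv m n (A : 'M[R]_(m, n)) (X : 'M[R]_(n, m)) : Prop :=
  [/\ A *m X *m A = A, X *m A *m X = X, (A *m X)^T = A *m X & (X *m A)^T = X *m A].

(* The Moore-Penrose inverse A^dagger (it exists and is unique; chosen by epsilon) *)
Definition mpinv m n (A : 'M[R]_(m, n)) : 'M[R]_(n, m) :=
  epsilon (inhabits 0) (fun X => is_mpinv A X).

(* X >= 0 : all entries nonnegative and at least one entry positive *)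
Definition mx_nonneg m n (X : 'M[R]_(m, n)) : Prop :=
  (forall i j, 0 <= X i j) /\ (exists i j, 0 < X i j).

Definition mx_ge m n (X Y : 'M[R]_(m, n)) : Prop := mx_nonneg (X - Y).

Definition mx_range m n (X : 'M[R]_(m, n)) (y : 'cV[R]_m) : Prop :=
  exists x : 'cV[R]_n, y = X *m x.
Definition mx_null m n (X : 'M[R]_(m, n)) (x : 'cV[R]_n) : Prop :=
  X *m x = 0.

Definition proper_splitting m n (A U V : 'M[R]_(m, n)) : Prop :=
  [/\ A = U - V,
      (forall y, mx_range U y <-> mx_range A y) &
      (forall x, mx_null U x <-> mx_null A x)].

Definition proper_regular_splitting m n (A U V : 'M[R]_(m, n)) : Prop :=
  [/\ proper_splitting A U V, mx_nonneg (mpinv U) & mx_nonneg V].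

Definition proper_weak_regular_splitting m n (A U V : 'M[R]_(m, n)) : Prop :=
  [/\ proper_splitting A U V, mx_nonneg (mpinv U) & mx_nonneg (mpinv U *m V)].

Definition eigenvalues n (X : 'M[R]_n) : seq R[i] :=
  sval (closed_field_poly_normal (char_poly (map_mx (fun x : R => (x%:C)%C) X))).

(* spectral radius: the largest modulus of an eigenvalue (0 for empty matrices) *)
Definition spectral_radius n (X : 'M[R]_n) : R :=
  \big[Num.max/0]_(z <- eigenvalues X) Normc.normc z.

End Defs.

(* Main.v *)
Require Import Defs.
From HB Require Import structures.
From mathcomp Require Import all_boot all_order all_algebra.
From mathcomp Require Import complex reals.
Import Order.TTheory GRing.Theory Num.Theory.
Local Open Scope ring_scope.
Set Implicit Arguments. Unset Strict Implicit. Unset Printing Implicit Defensive.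

Section MP.
Variable R : realType.

Lemma sos_eq0 m (y : 'rV[R]_m) : y *m y^T = 0 -> y = 0.
Proof.
move=> /matrixP /(_ 0 0); rewrite !mxE => H.
have H0 : forall j, y 0 j * y 0 j = 0.
  move=> j; apply: (@psumr_eq0P _ _ xpredT (fun j => y 0 j * y 0 j)) => //.
    by move=> k _; rewrite -expr2 sqr_ge0.
  by rewrite -[RHS]H; apply: eq_bigr => k _; rewrite mxE.
apply/rowP => j; rewrite mxE; move: (H0 j) => /eqP; rewrite mulf_eq0 orbb => /eqP //.
Qed.

Lemma gram_unit r m (F : 'M[R]_(r, m)) : row_free F -> (F *m F^T) \in unitmx.
Proof.
move=> fF; rewrite unitmxE unitfE; apply/negP => /det0P [v v0 vF].
have : v *m F = 0.
  apply: sos_eq0; by rewrite trmx_mul mulmxA -(mulmxA v) vF mul0mx.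
by move/eqP; rewrite mulmx_free_eq0 // (negbTE v0).
Qed.

Lemma mp_fact r m n (F : 'M[R]_(r, m)) (G : 'M[R]_(r, n)) :
  row_free F -> row_free G ->
  is_mpinv (F^T *m G) (G^T *m invmx (G *m G^T) *m invmx (F *m F^T) *m F).
Proof.
move=> fF fG.
set P := invmx (F *m F^T); set Q := invmx (G *m G^T).
have uP := gram_unit fF; have uQ := gram_unit fG.
have PT : P^T = P by rewrite /P trmx_inv trmx_mul trmxK.
have QT : Q^T = Q by rewrite /Q trmx_inv trmx_mul trmxK.
have AX : (F^T *m G) *m (G^T *m Q *m P *m F) = F^T *m P *m F.
  by rewrite !mulmxA -[F^T *m G *m G^T]mulmxA -[F^T *m _ *m Q]mulmxA /Q mulmxV // mulmx1.
have XA : (G^T *m Q *m P *m F) *m (F^T *m G) = G^T *m Q *m G.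
  by rewrite !mulmxA -(mulmxA _ F) -(mulmxA (G^T *m Q) P) /P mulVmx // mulmx1.
split.
- by rewrite AX !mulmxA -[F^T *m P *m F *m F^T]mulmxA -[F^T *m P *m _]mulmxA /P mulVmx // mulmx1.
- by rewrite XA !mulmxA -[G^T *m Q *m G *m G^T]mulmxA -[G^T *m Q *m _]mulmxA /Q mulVmx // mulmx1.
- by rewrite AX !trmx_mul trmxK PT mulmxA.
- by rewrite XA !trmx_mul trmxK QT mulmxA.
Qed.

Lemma mp_exists m n (A : 'M[R]_(m, n)) : exists X, is_mpinv A X.
Proof.
have fF : row_free (col_base A)^T.
  by rewrite /row_free mxrank_tr; have := col_base_full A; rewrite /row_full.
have fG : row_free (row_base A) by exact: row_base_free.
have := mp_fact fF fG; rewrite trmxK mulmx_base => H; by eexists; exact: H.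
Qed.

Lemma mpinvP m n (A : 'M[R]_(m, n)) : is_mpinv A (mpinv A).
Proof.
rewrite /mpinv; case: (mp_exists A) => X HX.
exact: (ClassicalEpsilon.epsilon_spec (inhabits 0) (fun X => is_mpinv A X) (ex_intro _ X HX)).
Qed.
End MP.
Section Proj.
Variable R : realType.

Lemma colsP m n (X : 'M[R]_(m, n)) : (forall j, col j X = 0) -> X = 0.
Proof.
move=> H; apply/matrixP => i j; move: (H j) => /matrixP /(_ i 0).
by rewrite !mxE.
Qed.

Lemma col_mul m n p (A : 'M[R]_(m, n)) (B : 'M[R]_(n, p)) j :
  col j (A *m B) = A *m col j B.
Proof.
by apply/matrixP => i k; rewrite !mxE; apply: eq_bigr => l _; rewrite !mxE.
Qed.

Lemma proj_eq1 n (P Q : 'M[R]_n) : P^T = P -> Q^T = Q ->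
  P *m Q = P -> Q *m P = Q -> P = Q.
Proof. by move=> PT QT PQ QP; rewrite -PT -PQ trmx_mul PT QT QP. Qed.

Lemma proj_eq2 n (P Q : 'M[R]_n) : P^T = P -> Q^T = Q ->
  P *m Q = Q -> Q *m P = P -> P = Q.
Proof. by move=> PT QT PQ QP; rewrite -PT -QP trmx_mul PT QT PQ. Qed.

Lemma null_eq m n p (A U V : 'M[R]_(m, n)) (M : 'M[R]_(n, p)) :
  proper_splitting A U V -> A *m M = 0 -> U *m M = 0.
Proof.
case=> _ _ HN AM; apply: colsP => j; rewrite col_mul; apply/HN.
by rewrite /mx_null -col_mul AM; apply/matrixP => i k; rewrite !mxE.
Qed.

Lemma null_eq' m n p (A U V : 'M[R]_(m, n)) (M : 'M[R]_(n, p)) :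
  proper_splitting A U V -> U *m M = 0 -> A *m M = 0.
Proof.
case=> _ _ HN AM; apply: colsP => j; rewrite col_mul; apply/HN.
by rewrite /mx_null -col_mul AM; apply/matrixP => i k; rewrite !mxE.
Qed.

Lemma mpA m n (A : 'M[R]_(m, n)) : A *m mpinv A *m A = A.
Proof. by case: (mpinvP A). Qed.
Lemma mpAA m n (A : 'M[R]_(m, n)) : mpinv A *m A *m mpinv A = mpinv A.
Proof. by case: (mpinvP A). Qed.
Lemma mpT1 m n (A : 'M[R]_(m, n)) : (A *m mpinv A)^T = A *m mpinv A.
Proof. by case: (mpinvP A). Qed.
Lemma mpT2 m n (A : 'M[R]_(m, n)) : (mpinv A *m A)^T = mpinv A *m A.
Proof. by case: (mpinvP A). Qed.

Lemma ps_right m n (A U V : 'M[R]_(m, n)) :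
  proper_splitting A U V -> mpinv U *m U = mpinv A *m A.
Proof.
move=> ps; apply: proj_eq1; rewrite ?mpT2 //.
- apply/eqP; rewrite -subr_eq0 -{2}(mulmx1 (_ *m U)) -mulmxBr; apply/eqP.
  rewrite -mulmxA (null_eq ps) ?mulmx0 //.
  by rewrite mulmxBr mulmx1 mulmxA mpA subrr.
- apply/eqP; rewrite -subr_eq0 -{2}(mulmx1 (_ *m A)) -mulmxBr; apply/eqP.
  rewrite -mulmxA (null_eq' ps) ?mulmx0 //.
  by rewrite mulmxBr mulmx1 mulmxA mpA subrr.
Qed.

Lemma range_eq m n (A U V : 'M[R]_(m, n)) :
  proper_splitting A U V -> (1 - A *m mpinv A) *m U = 0.
Proof.
case=> _ HR _; apply: colsP => j; rewrite col_mul.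
have [x ->] : mx_range A (col j U).
  by apply/HR; exists (col j 1%:M); rewrite -col_mul mulmx1.
by rewrite mulmxA mulmxBl mul1mx mpA subrr mul0mx.
Qed.

Lemma range_eq' m n (A U V : 'M[R]_(m, n)) :
  proper_splitting A U V -> (1 - U *m mpinv U) *m A = 0.
Proof.
case=> _ HR _; apply: colsP => j; rewrite col_mul.
have [x ->] : mx_range U (col j A).
  by apply/HR; exists (col j 1%:M); rewrite -col_mul mulmx1.
by rewrite mulmxA mulmxBl mul1mx mpA subrr mul0mx.
Qed.

Lemma ps_left m n (A U V : 'M[R]_(m, n)) :
  proper_splitting A U V -> U *m mpinv U = A *m mpinv A.
Proof.
move=> ps; apply: proj_eq2; rewrite ?mpT1 //.
- have := range_eq' ps; rewrite mulmxBl mul1mx => /eqP; rewrite subr_eq0 => /eqP H.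
  by rewrite mulmxA -H.
- have := range_eq ps; rewrite mulmxBl mul1mx => /eqP; rewrite subr_eq0 => /eqP H.
  by rewrite mulmxA -H.
Qed.
End Proj.

Section Alg.
Variable R : realType.
Variables m n : nat.
Implicit Types A U V : 'M[R]_(m, n).

Lemma T_eq A U V : proper_splitting A U V ->
  mpinv U *m V = mpinv A *m A - mpinv U *m A.
Proof.
move=> ps; have [AE _ _] := ps.
have VE : V = U - A by rewrite AE opprB addrC subrK.
by rewrite VE mulmxBr (ps_right ps).
Qed.

Lemma inv_eq A U V : proper_splitting A U V ->
  (1 - mpinv U *m V) *m (1 + mpinv A *m V) = 1.
Proof.
move=> ps; have [AE _ _] := ps.
have VE : V = U - A by rewrite AE opprB addrC subrK.
have H1 : mpinv U *m V *m mpinv A = mpinv A - mpinv U.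
  rewrite VE mulmxBr mulmxBl (ps_right ps) mpAA -mulmxA -(ps_left ps).
  by rewrite mulmxA mpAA.
rewrite mulmxBl mul1mx mulmxDr mulmx1 mulmxA H1 mulmxBl.
by rewrite [X in _ - X]addrC subrK addrK.
Qed.
End Alg.
Section Eig.
Variable R : realType.
Local Notation CC := R[i].
Local Notation nc := (@Normc.normc R).

Lemma ncE (z : CC) : `|z| = ((nc z)%:C)%C.
Proof. by []. Qed.

Lemma nc_ge0 (z : CC) : 0 <= nc z.
Proof. by rewrite -(@lecR R) -ncE normr_ge0. Qed.

Lemma ncM (x y : CC) : nc (x * y) = nc x * nc y.
Proof. exact: Normc.normcM. Qed.

Lemma nc_sum I (r : seq I) (F : I -> CC) : nc (\sum_(i <- r) F i) <= \sum_(i <- r) nc (F i).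
Proof.
rewrite -(@lecR R) -ncE rmorph_sum /=.
by apply: le_trans (ler_norm_sum _ _ _) _; apply: ler_sum => i _; rewrite ncE.
Qed.

Lemma nc_real (x : R) : nc (x%:C)%C = `|x|.
Proof. by rewrite /Normc.normc /= expr0n /= addr0 sqrtr_sqr. Qed.

Lemma nc_eq0 (z : CC) : (nc z == 0) = (z == 0).
Proof. by rewrite -(inj_eq (@complexI R)) -ncE normr_eq0. Qed.

Definition toC p q (X : 'M[R]_(p, q)) : 'M[CC]_(p, q) := map_mx (real_complex R) X.

Lemma toC_mul p q r (X : 'M[R]_(p, q)) (Y : 'M[R]_(q, r)) : toC (X *m Y) = toC X *m toC Y.
Proof. exact: map_mxM. Qed.

Lemma eig_char n (X : 'M[R]_n) : char_poly (toC X) = \prod_(z <- eigenvalues X) ('X - z%:P).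
Proof.
rewrite /eigenvalues /toC.
have -> : (fun x : R => (x%:C)%C) = real_complex R by [].
case: closed_field_poly_normal => r /= Hr.
by rewrite {1}Hr (monicP (char_poly_monic _)) scale1r.
Qed.

Lemma eig_root n (X : 'M[R]_n) z : root (char_poly (toC X)) z = (z \in eigenvalues X).
Proof. by rewrite eig_char root_prod_XsubC. Qed.

Lemma eig_vec n (X : 'M[R]_n) z : z \in eigenvalues X ->
  exists2 v : 'rV[CC]_n, v *m toC X = z *: v & v != 0.
Proof. by rewrite -eig_root -eigenvalue_root_char => /eigenvalueP. Qed.

Lemma sr_ge0 n (X : 'M[R]_n) : 0 <= spectral_radius X.
Proof.
rewrite /spectral_radius; elim/big_rec: _ => // z x _ Hx.
by rewrite le_max Hx orbT.
Qed.

Lemma sr_ge n (X : 'M[R]_n) z : z \in eigenvalues X -> nc z <= spectral_radius X.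
Proof.
rewrite /spectral_radius; elim: (eigenvalues X) => // a s IH.
rewrite inE big_cons le_max => /orP [/eqP ->|/IH ->]; first by rewrite lexx.
by rewrite orbT.
Qed.

Lemma sr_le n (X : 'M[R]_n) r : 0 <= r ->
  (forall z, z \in eigenvalues X -> nc z <= r) -> spectral_radius X <= r.
Proof.
rewrite /spectral_radius; elim: (eigenvalues X) => [|a s IH] r0 H.
  by rewrite big_nil.
rewrite big_cons ge_max H ?inE ?eqxx // IH // => z zs.
by apply: H; rewrite inE zs orbT.
Qed.

Lemma sr_lt n (X : 'M[R]_n) r : 0 < r ->
  (forall z, z \in eigenvalues X -> nc z < r) -> spectral_radius X < r.
Proof.
rewrite /spectral_radius; elim: (eigenvalues X) => [|a s IH] r0 H.
  by rewrite big_nil.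
rewrite big_cons gt_max H ?inE ?eqxx // IH // => z zs.
by apply: H; rewrite inE zs orbT.
Qed.

Lemma eig_ineq n (X : 'M[R]_n) (v : 'rV[CC]_n) z :
  (forall i j, 0 <= X i j) -> v *m toC X = z *: v ->
  forall j, nc z * nc (v 0 j) <= \sum_i nc (v 0 i) * X i j.
Proof.
move=> X0 Hv j; rewrite -ncM.
have -> : z * v 0 j = (v *m toC X) 0 j by rewrite Hv mxE.
rewrite mxE; apply: le_trans; first exact: nc_sum.
apply: ler_sum => i _; rewrite mxE ncM nc_real ger0_norm //.
Qed.
End Eig.

Section Gen.
Variable R : realType.
Local Notation CC := R[i].
Local Notation nc := (@Normc.normc R).

Definition mpow (T : nzRingType) n (M : 'M[T]_n) k := iter k (mulmx M) 1%:M.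

Lemma mpowS (T : nzRingType) n (M : 'M[T]_n) k : mpow M k.+1 = M *m mpow M k.
Proof. by []. Qed.

Lemma toC_mpow n (X : 'M[R]_n) k : toC (mpow X k) = mpow (toC X) k.
Proof. elim: k => [|k IH]; first exact: map_mx1. by rewrite !mpowS toC_mul IH. Qed.

Lemma mpow_conj (T : nzRingType) n (M P P' : 'M[T]_n) k :
  P *m P' = 1%:M -> P' *m P = 1%:M ->
  mpow (P' *m M *m P) k = P' *m mpow M k *m P.
Proof.
move=> H1 H2; elim: k => [|k IH]; first by rewrite /= mulmx1 H2.
rewrite !mpowS IH !mulmxA -(mulmxA _ P P') H1 mulmx1.
by rewrite -!mulmxA.
Qed.

Lemma le_sum_term (I : finType) (F : I -> R) i : (forall j, 0 <= F j) -> F i <= \sum_j F j.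
Proof. by move=> H; rewrite (bigD1 i) //= lerDl sumr_ge0. Qed.

Lemma mx_bound p q (M : 'M[CC]_(p, q)) : exists c, 0 <= c /\ forall i j, nc (M i j) <= c.
Proof.
exists (\sum_i \sum_j nc (M i j)); split.
  by apply: sumr_ge0 => i _; apply: sumr_ge0 => j _; apply: nc_ge0.
move=> i j.
have H1 : \sum_j nc (M i j) <= \sum_i \sum_j nc (M i j).
  by rewrite [X in _ <= X](bigD1 i) //= lerDl; apply: sumr_ge0 => k _; apply: sumr_ge0 => l _; apply: nc_ge0.
apply: le_trans H1.
by rewrite [X in _ <= X](bigD1 j) //= lerDl; apply: sumr_ge0 => k _; apply: nc_ge0.
Qed.

Lemma bern (x : R) k : 0 <= x -> 1 + k%:R * x <= (1 + x) ^+ k.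
Proof.
move=> x0; elim: k => [|k IH]; first by rewrite mul0r addr0 expr0.
rewrite exprSr; apply: le_trans (_ : (1 + k%:R * x) * (1 + x) <= _); last first.
  by rewrite ler_pM2r ?IH // (lt_le_trans ltr01) // lerDl.
rewrite mulrDl mul1r mulrDr mulr1 -natr1 mulrDl mul1r addrA addrAC -!addrA !lerD2l lerDl.
by rewrite !mulr_ge0 ?ler0n.
Qed.

Lemma pow_bound n (Y : 'M[CC]_n) q : 0 <= q ->
  (forall i, \sum_j nc (Y i j) <= q) ->
  forall k i, \sum_j nc (mpow Y k i j) <= q ^+ k.
Proof.
move=> q0 HY; elim=> [|k IH] i.
  rewrite expr0 /= (bigD1 i) //= big1 => [|j ji]; last first.
    have -> : (1%:M : 'M[CC]_n) i j = 0 by rewrite mxE eq_sym (negbTE ji).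
    exact: Normc.normc0.
  have -> : (1%:M : 'M[CC]_n) i i = 1 by rewrite mxE eqxx.
  by rewrite addr0 Normc.normc1.
rewrite mpowS; apply: le_trans (_ : \sum_j \sum_l nc (Y i l) * nc (mpow Y k l j) <= _).
  apply: ler_sum => j _; rewrite mxE; apply: le_trans; first exact: nc_sum.
  by apply: ler_sum => l _; rewrite ncM.
rewrite exchange_big.
apply: le_trans (_ : \sum_l nc (Y i l) * q ^+ k <= _).
  apply: ler_sum => l _; rewrite -mulr_sumr; apply: ler_wpM2l; [exact: nc_ge0 | exact: IH].
rewrite -mulr_suml exprSr [q ^+ k * q]mulrC; apply: ler_wpM2r; [exact: exprn_ge0 | exact: HY].
Qed.
End Gen.

Section Gen2.
Variable R : realType.
Local Notation CC := R[i].
Local Notation nc := (@Normc.normc R).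

Lemma trig_eig n (X : 'M[R]_n) (P : 'M[CC]_n) : P \in unitmx ->
  is_trig_mx (P *m toC X *m invmx P) ->
  forall i, (P *m toC X *m invmx P) i i \in eigenvalues X.
Proof.
move=> Pu Dt i; set D := P *m toC X *m invmx P.
have : eigenvalue D (D i i).
  rewrite eigenvalue_root_char char_poly_trig // /root horner_prod (bigD1 i) //=.
  by rewrite hornerXsubC subrr mul0r.
move/eigenvalueP => [v vD v0].
rewrite -eig_root -eigenvalue_root_char; apply/eigenvalueP; exists (v *m P).
  have DP : D *m P = P *m toC X by rewrite /D -mulmxA mulVmx // mulmx1.
  by rewrite -mulmxA -DP mulmxA vD scalemxAl.
by rewrite mulmx_free_eq0 ?row_free_unit.
Qed.

Lemma diag_mul n (a b : 'rV[CC]_n) :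
  diag_mx a *m diag_mx b = diag_mx (\row_i (a 0 i * b 0 i)).
Proof.
apply/matrixP => i j; rewrite mul_diag_mx !mxE.
by case: (i == j); rewrite ?mulr1n ?mulr0n ?mulr0.
Qed.

Lemma nc_realC (x : R) : 0 <= x -> nc (x%:C)%C = x.
Proof. by move=> x0; rewrite nc_real ger0_norm. Qed.

Lemma scale_bound n (D : 'M[CC]_n) r q : is_trig_mx D -> 0 <= r -> r < q ->
  (forall i, nc (D i i) <= r) ->
  exists E F : 'M[CC]_n, [/\ E *m F = 1%:M, F *m E = 1%:M &
     forall i, \sum_j nc ((E *m D *m F) i j) <= q].
Proof.
move=> /is_trig_mxP Dt r0 rq Dr.
set cD := \sum_i \sum_j nc (D i j).
have cD0 : 0 <= cD by apply: sumr_ge0 => i _; apply: sumr_ge0 => j _; apply: nc_ge0.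
set eps := Num.min 1 ((q - r) / (cD + 1)).
have qr0 : 0 < q - r by rewrite subr_gt0.
have cD1 : 0 < cD + 1 by rewrite ltr_wpDl.
have eps0 : 0 < eps by rewrite lt_min ltr01 divr_gt0.
have eps1 : eps <= 1 by rewrite ge_min lexx.
have eps0' : 0 <= eps by exact: ltW.
have epsV0 : 0 <= eps^-1 by rewrite invr_ge0.
have epsc : eps * cD <= q - r.
  apply: le_trans (_ : (q - r) / (cD + 1) * cD <= _).
    by apply: ler_wpM2r => //; rewrite ge_min lexx orbT.
  rewrite mulrAC ler_pdivrMr // ler_wpM2l ?ltW //.
  by rewrite ltrDl ltr01.
have epsn0 : eps != 0 by rewrite gt_eqF.
pose E := diag_mx (\row_i ((eps ^+ i)%:C)%C : 'rV[CC]_n).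
pose F := diag_mx (\row_i ((eps^-1 ^+ i)%:C)%C : 'rV[CC]_n).
have EF1 : forall i : 'I_n, (eps ^+ i)%:C%C * (eps^-1 ^+ i)%:C%C = 1 :> CC.
  move=> i; rewrite -rmorphM /= exprVn mulfV ?expf_neq0 //.
have H1 : diag_mx (\row_i (1 : CC)) = 1%:M :> 'M[CC]_n.
  by rewrite -diag_const_mx; congr diag_mx; apply/rowP => i; rewrite !mxE.
exists E, F; split.
- by rewrite diag_mul -H1; congr diag_mx; apply/rowP => i; rewrite !mxE EF1.
- by rewrite diag_mul -H1; congr diag_mx; apply/rowP => i; rewrite !mxE mulrC EF1.
move=> i.
have Yb : forall j, nc ((E *m D *m F) i j) <= (if j == i then nc (D i i) else eps * nc (D i j)).
  move=> j; rewrite mul_mx_diag mul_diag_mx !mxE !ncM !nc_realC ?exprn_ge0 //.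
  case: eqP => [->|/eqP ji].
    by rewrite mulrAC -exprMn mulfV // expr1n mul1r.
  case: (ltngtP i j) => [ij|ji'|/val_inj ij]; last by move: ji; rewrite ij eqxx.
    have N0 : nc 0 = 0 by apply/eqP; rewrite nc_eq0.
    by rewrite Dt // N0 !mulr0 mul0r.
  rewrite mulrAC; apply: ler_wpM2r; first exact: nc_ge0.
  apply: le_trans (_ : eps ^+ j.+1 * eps^-1 ^+ j <= _).
    apply: ler_wpM2r; first by rewrite exprn_ge0.
    exact: ler_wiXn2l.
  by rewrite exprS -mulrA exprVn mulfV ?mulr1 ?expf_neq0.
apply: le_trans (_ : \sum_j (if j == i then nc (D i i) else eps * nc (D i j)) <= _).
  by apply: ler_sum => j _; apply: Yb.
rewrite (bigD1 i) //= eqxx.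
have -> : q = r + (q - r) by rewrite addrC subrK.
apply: lerD; first exact: Dr.
apply: le_trans epsc.
apply: le_trans (_ : \sum_(j | j != i) eps * nc (D i j) <= _).
  by apply: ler_sum => j ji; rewrite (negbTE ji).
rewrite -mulr_sumr; apply: ler_wpM2l => //.
apply: le_trans (_ : \sum_j nc (D i j) <= _).
  by rewrite [X in _ <= X](bigD1 i) //= lerDr nc_ge0.
by rewrite /cD [X in _ <= X](bigD1 i) //= lerDl; apply: sumr_ge0 => k _; apply: sumr_ge0 => l _; apply: nc_ge0.
Qed.
End Gen2.

Section Gen3.
Variable R : realType.
Local Notation CC := R[i].
Local Notation nc := (@Normc.normc R).

Lemma entry_bound n (L Rr Z : 'M[CC]_n) cL cR : 0 <= cL -> 0 <= cR ->
  (forall a i, nc (L a i) <= cL) -> (forall j b, nc (Rr j b) <= cR) ->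
  forall a b, nc ((L *m Z *m Rr) a b) <= cL * cR * \sum_i \sum_j nc (Z i j).
Proof.
move=> cL0 cR0 HL HR a b; rewrite mxE.
apply: le_trans; first exact: nc_sum.
apply: le_trans (_ : \sum_j (\sum_i cL * nc (Z i j)) * cR <= _).
  apply: ler_sum => j _; rewrite ncM; apply: ler_pM; rewrite ?nc_ge0 //.
  rewrite mxE; apply: le_trans; first exact: nc_sum.
  apply: ler_sum => i _; rewrite ncM; apply: ler_wpM2r; rewrite ?nc_ge0 //.
rewrite exchange_big /=.
rewrite (_ : \sum_j (\sum_i cL * nc (Z i j)) * cR = cL * cR * \sum_j \sum_i nc (Z i j)) //.
rewrite -mulr_suml mulrAC mulr_sumr; congr (_ * _); apply: eq_bigr => j _.
by rewrite mulr_sumr.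
Qed.

Lemma gen n (X : 'M[R]_n) (w : 'rV[R]_n) mu :
  (forall i j, 0 <= X i j) -> (forall j, 0 <= w 0 j) -> (exists j, 0 < w 0 j) -> 0 < mu ->
  (forall j, mu * w 0 j <= (w *m X) 0 j) -> mu <= spectral_radius X.
Proof.
move=> X0 w0 [j0 wj0] mu0 Hw.
rewrite leNgt; apply/negP => rmu.
have r0 := sr_ge0 X.
have n0 : (0 < n)%N := leq_ltn_trans (leq0n _) (ltn_ord j0).
have [P Pu Dt] := Schur (toC X) n0.
have Punit : P \in unitmx := unitarymx_unit Pu.
move: Dt; rewrite /similar_to /conjmx pinvmxE // => Dt.
have Dd : forall i, nc ((P *m toC X *m invmx P) i i) <= spectral_radius X.
  by move=> i; apply: sr_ge; apply: trig_eig.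
set D := P *m toC X *m invmx P in Dt Dd.
set r := spectral_radius X in rmu r0 Dd.
set q := (r + mu) / 2.
have [rq qmu] := midf_lt rmu.
have q0 : 0 < q by apply: le_lt_trans r0 rq.
have [E [F [EF FE Yb]]] := scale_bound Dt r0 rq Dd.
set Y := E *m D *m F in Yb.
have Ypow := pow_bound (ltW q0) Yb.
have XCE : toC X = invmx P *m D *m P.
  by rewrite /D !mulmxA mulVmx // mul1mx -mulmxA mulVmx // mulmx1.
have DE : D = F *m Y *m E.
  by rewrite /Y !mulmxA FE mul1mx -mulmxA FE mulmx1.
have XkE : forall k, toC (mpow X k) = (invmx P *m F) *m mpow Y k *m (E *m P).
  move=> k; rewrite toC_mpow XCE (mpow_conj _ _ (mulmxV Punit) (mulVmx Punit)).
  by rewrite DE (mpow_conj _ _ EF FE) !mulmxA.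
have [cL [cL0 HL]] := mx_bound (invmx P *m F).
have [cR [cR0 HR]] := mx_bound (E *m P).
set K := cL * cR * n%:R.
have K0 : 0 <= K by rewrite !mulr_ge0.
have Xkb : forall k a b, mpow X k a b <= K * q ^+ k.
  move=> k a b; apply: le_trans (ler_norm _) _.
  rewrite -nc_real. rewrite (_ : ((mpow X k a b)%:C)%C = toC (mpow X k) a b); last by rewrite mxE.
  rewrite XkE.
  apply: le_trans (@entry_bound _ _ _ (mpow Y k) _ _ cL0 cR0 HL HR a b) _.
  rewrite /K -!mulrA; apply: ler_wpM2l => //; apply: ler_wpM2l => //.
  apply: le_trans (_ : \sum_(i < n) q ^+ k <= _); first by apply: ler_sum => i _.
  by rewrite sumr_const card_ord mulr_natl.
have Xk0 : forall k i j, 0 <= mpow X k i j.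
  elim=> [|k IH] i j; first by rewrite mxE ler0n.
  by rewrite mpowS mxE; apply: sumr_ge0 => l _; rewrite mulr_ge0.
have low : forall k j, mu ^+ k * w 0 j <= (w *m mpow X k) 0 j.
  elim=> [|k IH] j; first by rewrite expr0 mul1r /= mulmx1.
  rewrite mpowS mulmxA !mxE exprSr -mulrA.
  apply: le_trans (_ : mu * (w *m mpow X k) 0 j <= _).
    by rewrite mulrCA; apply: ler_wpM2l; [exact: ltW | exact: IH].
  rewrite mxE mulr_sumr; apply: ler_sum => a _; rewrite mulrA.
  by apply: ler_wpM2r; [exact: Xk0 | exact: Hw].
set W := \sum_a w 0 a.
have up : forall k, mu ^+ k * w 0 j0 <= W * K * q ^+ k.
  move=> k; apply: le_trans (low k j0) _; rewrite mxE /W -mulrA mulr_suml.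
  by apply: ler_sum => a _; apply: ler_wpM2l; [exact: w0 | exact: Xkb].
set t := mu / q.
have t1 : 1 < t by rewrite /t ltr_pdivlMr // mul1r.
have tq : mu = t * q by rewrite /t divfK // gt_eqF.
have up2 : forall k, t ^+ k * w 0 j0 <= W * K.
  by move=> k; have := up k; rewrite tq exprMn mulrAC ler_pM2r ?exprn_gt0.
set x := t - 1.
have x0 : 0 < x by rewrite subr_gt0.
have W0 : 0 <= W * K by rewrite mulr_ge0 // sumr_ge0.
set c := W * K / (w 0 j0 * x).
have c0 : 0 <= c by rewrite divr_ge0 // mulr_ge0 // ltW.
have hk := archi_boundP c0; set k := Num.Def.archi_bound c in hk.
have A1 : W * K < k%:R * (w 0 j0 * x) by rewrite -ltr_pdivrMr ?mulr_gt0.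
have A2 : k%:R * (w 0 j0 * x) < t ^+ k * w 0 j0.
  apply: lt_le_trans (_ : (1 + k%:R * x) * w 0 j0 <= _); last first.
    rewrite ler_pM2r //; have -> : t = 1 + x by rewrite /x addrC subrK.
    exact: bern (ltW x0).
  rewrite mulrDl mul1r; have -> : k%:R * x * w 0 j0 = k%:R * (w 0 j0 * x) by rewrite mulrAC -mulrA.
  by rewrite ltrDr.
by have := lt_le_trans (lt_trans A1 A2) (up2 k); rewrite ltxx.
Qed.
End Gen3.

Section Main.
Variable R : realType.
Local Notation CC := R[i].
Local Notation nc := (@Normc.normc R).

Lemma mulmx_ge0 p q s (P : 'M[R]_(p, q)) (Q : 'M[R]_(q, s)) :
  (forall i j, 0 <= P i j) -> (forall i j, 0 <= Q i j) -> forall i j, 0 <= (P *m Q) i j.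
Proof.
by move=> HP HQ i j; rewrite mxE; apply: sumr_ge0 => k _; apply: mulr_ge0.
Qed.

Lemma nz_entry n (v : 'rV[CC]_n) : v != 0 -> exists j, 0 < nc (v 0 j).
Proof.
move=> v0; case: (pickP (fun j => v 0 j != 0)) => [j Hj | H].
  by exists j; rewrite lt_def nc_eq0 Hj nc_ge0.
have v00 : v = 0.
  apply/rowP => j; rewrite mxE; have := H j; rewrite /= => /negbFE/eqP //.
by rewrite v00 eqxx in v0.
Qed.

Lemma sr_lt1 n (T M : 'M[R]_n) :
  (forall i j, 0 <= T i j) -> (forall i j, 0 <= M i j) -> (1%:M - T) *m M = 1%:M ->
  spectral_radius T < 1.
Proof.
move=> T0 M0 TM; apply: sr_lt; first exact: ltr01.
move=> z /eig_vec [v vT v0]; rewrite ltNge; apply/negP => z1.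
have Hi := eig_ineq T0 vT.
pose w := \row_j nc (v 0 j).
have w0 : forall j, 0 <= w 0 j by move=> j; rewrite mxE nc_ge0.
have neg : forall j, (w *m (1 - T)) 0 j <= 0.
  move=> j; rewrite mulmxBr mulmx1 !mxE subr_le0.
  apply: (le_trans (_ : _ <= nc z * nc (v 0 j))).
    by rewrite -[X in X <= _]mul1r; apply: ler_wpM2r; [exact: nc_ge0 | exact: z1].
  by apply: le_trans (Hi j) _; apply: ler_sum => i _; rewrite mxE.
have [j Hj] := nz_entry v0.
have : w 0 j <= 0.
  rewrite -[w]mulmx1 -TM mulmxA mxE; apply: sumr_le0 => k _.
  by apply: mulr_le0_ge0.
by rewrite mxE leNgt Hj.
Qed.
End Main.

Lemma sr_mono (R : realType) n (S T : 'M[R]_n) :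
  (forall i j, 0 <= S i j) -> (forall i j, S i j <= T i j) ->
  spectral_radius S <= spectral_radius T.
Proof.
move=> S0 ST; apply: sr_le; first exact: sr_ge0.
move=> z /eig_vec [v vS v0].
have Hi := eig_ineq S0 vS.
have [z0|zpos] := eqVneq (Normc.normc z) 0; first by rewrite z0 sr_ge0.
have zp : 0 < Normc.normc z by rewrite lt_def zpos nc_ge0.
apply: (@gen R n T (\row_j Normc.normc (v 0 j))) => //.
- by move=> i j; apply: le_trans (S0 i j) (ST i j).
- by move=> j; rewrite mxE nc_ge0.
- by have [j Hj] := nz_entry v0; exists j; rewrite mxE.
- move=> j; rewrite mxE; apply: le_trans (Hi j) _; rewrite mxE.
  apply: ler_sum => i _; rewrite mxE; apply: ler_wpM2l; [exact: nc_ge0 | exact: ST].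
Qed.

Unset Implicit Arguments.
Set Strict Implicit.

Theorem theorem3p9 (R : realType) (m n : nat) (A B C U V : 'M[R]_(m, n)) :
  mx_nonneg (mpinv A) ->
  proper_weak_regular_splitting A B C ->
  proper_regular_splitting A U V ->
  mx_nonneg A ->
  mx_ge (mpinv B) (mpinv U) ->
  spectral_radius (mpinv B *m C) <= spectral_radius (mpinv U *m V) /\
  spectral_radius (mpinv U *m V) < 1.
Proof.
move=> [Ad0 _] [psB _ [S0 _]] [psU [Ud0 _] [V0 _]] [A0 _] [BU0 _].
have T0 : forall i j, 0 <= (mpinv U *m V) i j by apply: mulmx_ge0.
split.
- apply: sr_mono => // i j.
  rewrite -subr_ge0 (T_eq psU) (T_eq psB).
  have -> : forall (X Y : 'M[R]_n), X i j - Y i j = (X - Y) i j by move=> X Y; rewrite !mxE.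
  have -> : (mpinv A *m A - mpinv U *m A) - (mpinv A *m A - mpinv B *m A) = (mpinv B - mpinv U) *m A.
    by rewrite mulmxBl opprB addrC addrA subrK.
  by apply: mulmx_ge0 => // k l; have := BU0 k l; rewrite mxE.
- apply: (@sr_lt1 _ _ _ (1%:M + mpinv A *m V)) => //.
    move=> i j; rewrite mxE; apply: addr_ge0; first by rewrite mxE ler0n.
    by apply: mulmx_ge0.
  exact: (inv_eq psU).
Qed.
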